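(* Let $k\in\mathbb{Z}$ and $\imath,q\in\mathbb{Z}_{>1}$. The rational polygon $\mathrm{conv}((0,0),(k,\imath),(k+1/q,\imath))$ is canonical if and only if there is an integer $c$ with $0<c<q$ and $kc\equiv-1\bmod \imath$.
   Context: For rationals $a<b$ and $\imath\in\mathbb{Z}_{>1}$, the polygon $\mathrm{conv}((0,0),(a,\imath),(b,\imath))$ is $\mathbb{Q}$-Gorenstein of index $\imath$ (with $\alpha=(0,1)$), and it is called canonical if every lattice point $p\neq(0,0)$ in it satisfies $p_2=\imath$, i.e. it contains no lattice point $p$ with $0<p_2<\imath$. *)

(* Defs.v *)
From HB Require Import structures.
From mathcomp Require Import all_boot all_order all_algebra.
Set Implicit Arguments. Unset Strict Implicit. Unset Printing Implicit Defensive.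
Import Order.TTheory GRing.Theory Num.Theory.
Local Open Scope ring_scope.

(* p lies in conv((0,0),(a,i),(b,i)) in Q^2: p is a convex combination
   l0*(0,0) + l1*(a,i) + l2*(b,i) with l0 = 1 - l1 - l2 >= 0. *)
Definition in_triangle (a b : rat) (i : int) (p : rat * rat) : Prop :=
  exists l1 l2 : rat,
    [/\ 0 <= l1, 0 <= l2, l1 + l2 <= 1,
        p.1 = l1 * a + l2 * b & p.2 = l1 * i%:~R + l2 * i%:~R].

Definition canonical_poly (a b : rat) (i : int) : Prop :=
  forall p : int * int,
    in_triangle a b i (p.1%:~R, p.2%:~R) -> p <> (0, 0) -> p.2 = i.

(* Main.v *)
Require Import Defs.
From HB Require Import structures.
From mathcomp Require Import all_boot all_order all_algebra.
From mathcomp Require Import zify ring lra.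
Import Order.TTheory GRing.Theory Num.Theory.
Local Open Scope ring_scope.

Lemma tri_fwd (k i q x h : int) : 1 < i -> 1 < q ->
  in_triangle k%:~R (k%:~R + 1 / q%:~R) i (x%:~R, h%:~R) ->
  [/\ 0 <= h, h <= i, 0 <= q * (x * i - k * h) & q * (x * i - k * h) <= h].
Proof.
move=> hi hq [l1 [l2 [h1 h2 h12 /= ex eh]]].
have qpos : (0 : rat) < q%:~R by rewrite ltr0z; lia.
have ipos : (0 : rat) < i%:~R by rewrite ltr0z; lia.
have qn0 : q%:~R != 0 :> rat by rewrite gt_eqF.
have in0 : i%:~R != 0 :> rat by rewrite gt_eqF.
have key : (q * (x * i - k * h))%:~R = l2 * i%:~R :> rat.
  rewrite intrM intrB !intrM ex eh; field; by rewrite ?qn0 ?in0.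
have eh' : h%:~R = (l1 + l2) * i%:~R :> rat.
  rewrite eh; ring.
split.
- rewrite -(ler_int rat) eh'; apply: mulr_ge0; lra.
- rewrite -(ler_int rat) eh'; nra.
- rewrite -(ler_int rat) key; apply: mulr_ge0; lra.
- rewrite -(ler_int rat) key eh'; nra.
Qed.

Lemma tri_bwd (k i q x h : int) : 1 < i -> 1 < q ->
  0 <= h -> h <= i -> 0 <= q * (x * i - k * h) -> q * (x * i - k * h) <= h ->
  in_triangle k%:~R (k%:~R + 1 / q%:~R) i (x%:~R, h%:~R).
Proof.
move=> hi hq h0 hhi r0 rh.
have qpos : (0 : rat) < q%:~R by rewrite ltr0z; lia.
have ipos : (0 : rat) < i%:~R by rewrite ltr0z; lia.
have qn0 : q%:~R != 0 :> rat by rewrite gt_eqF.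
have in0 : i%:~R != 0 :> rat by rewrite gt_eqF.
move: h0 hhi r0 rh; rewrite -!(ler_int rat) !intrM intrB !intrM => h0 hhi r0 rh.
set R := (x%:~R * i%:~R - k%:~R * h%:~R : rat) in r0 rh *.
exists (h%:~R / i%:~R - q%:~R * R / i%:~R), (q%:~R * R / i%:~R).
split.
- rewrite -mulrBl; apply: divr_ge0; lra.
- apply: divr_ge0; lra.
- rewrite addrNK ler_pdivrMr // mul1r; lra.
- rewrite /= /R; field; by rewrite ?qn0 ?in0.
- rewrite /=; field; by rewrite ?qn0 ?in0.
Qed.

Theorem mainTheorem7 (k i q : int) :
  1 < i -> 1 < q ->
  (canonical_poly k%:~R (k%:~R + 1 / q%:~R) i <->
   exists c : int, [/\ 0 < c, c < q & (k * c = - 1 %[mod i])%Z]).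
Proof.
move=> hi hq; split.
- move=> can.
  pose g := gcdz k i.
  have g0 : 0 <= g by rewrite /g /gcdz.
  have [a ha] : exists a, k = a * g by apply/dvdzP; exact: dvdz_gcdl.
  have [b hb] : exists b, i = b * g by apply/dvdzP; exact: dvdz_gcdr.
  have [u [v huv]] := Bezoutz k i.
  rewrite -/g in huv; clearbody g.
  have g1 : g = 1.
    apply/eqP; apply/negPn/negP => gn1.
    have gn1' : g <> 1 by move/eqP: gn1.
    have gn0 : g != 0 by apply/eqP=> e; rewrite e mulr0 in hb; lia.
    have g2 : 2 <= g by move: gn0 gn1 g0; lia.
    have b1 : 1 <= b by nia.
    have bi : b < i by nia.
    have T := @tri_bwd k i q a b hi hq.
    have := can (a, b); rewrite /=; move=> H.
    have hb' : b = i.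
      apply: H; last by case=> _ /eqP; rewrite gt_eqF //; lia.
      apply: T; nia.
    lia.
  rewrite g1 in huv.
  pose c0 := ((- u) %% i)%Z.
  pose w := ((- u) %/ i)%Z.
  have ec : - u = w * i + c0 by rewrite /w /c0 -divz_eq.
  have c0ge : 0 <= c0 by rewrite /c0 modz_ge0 // gt_eqF //; lia.
  have c0lt : c0 < i by rewrite /c0 ltz_pmod //; lia.
  clearbody c0 w.
  have c0pos : 0 < c0.
    rewrite lt_neqAle c0ge andbT; apply/negP => /eqP e0.
    rewrite -e0 addr0 in ec.
    have : (v - w * k) * i = 1.
      rewrite -huv; have -> : u = - (w * i) by rewrite -ec opprK.
      ring.
    move: (v - w * k) => z hz; clear -hz hi; have [z0|z0] := lerP z 0; nia.
  have c0q : c0 < q.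
    rewrite ltNge; apply/negP => qc.
    have T := @tri_bwd k i q (v - w * k) c0 hi hq.
    have e1 : (v - w * k) * i - k * c0 = 1.
      have -> : c0 = - u - w * i by rewrite ec; ring.
      rewrite -huv; ring.
    have H := can (v - w * k, c0).
    have : c0 = i.
      apply: H; last by case=> _ /eqP; rewrite gt_eqF.
      apply: T; rewrite ?e1 ?mulr1 //; lia.
    lia.
  exists c0; split => //.
  apply/eqP; rewrite eqz_mod_dvd; apply/dvdzP; exists (v - w * k).
  have -> : c0 = - u - w * i by rewrite ec; ring.
  rewrite -huv; ring.
- move=> [c [c0 cq hm]] [x h] /= T hne.
  have [h0 hi' r0 rh] := @tri_fwd k i q x h hi hq T.
  move/eqP: hm; rewrite eqz_mod_dvd => /dvdzP [t ht].
  have r0' : 0 <= x * i - k * h by nia.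
  have [hz|hpos] := eqVneq h 0.
    exfalso; apply: hne; rewrite hz in r0' rh *.
    have : x * i = 0 by nia.
    move/eqP; rewrite mulf_eq0 => /orP [/eqP -> //|]; rewrite gt_eqF //; lia.
  have [hei|hni] := eqVneq h i => //.
  exfalso.
  have em : c * (x * i - k * h) - h = (c * x - t * h) * i.
    have e2 : k * c = t * i - 1 by rewrite -ht; ring.
    have -> : c * (x * i - k * h) = c * x * i - (k * c) * h by ring.
    rewrite e2; ring.
  have [m0|m0] := leP 0 (c * x - t * h).
    have : c * (x * i - k * h) >= h by nia.
    nia.
  nia.
Qed.
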